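(* Fix $\alpha\in(0,1)$ and integers $k\ge1$, $m\ge1$. Let $(P_i)_{i\ge0}$ be the $\alpha$-random walk, $X_i(m)=1$ if $P_i$ is visible at level $m$ (else $0$), $Y_i(m)=X_i(m)\cdots X_{i+k-1}(m)$ and $\overline S_{n,k}(m)=\frac1n\sum_{i=1}^nY_i(m)$. Then $$\mathbf V(\overline S_{n,k}(m))\ll\frac{D_m^4}{\sqrt n},$$ with implied constant depending only on $\alpha$ and $k$.
   Context: The $\alpha$-random walk: $P_0=(0,0)$ and $P_{i+1}=P_i+(1,0)$ with probability $\alpha$, $P_{i+1}=P_i+(0,1)$ with probability $1-\alpha$, independently. A lattice point $(a,b)$ is visible at level $m$ if no prime $p<m$ divides both $a$ and $b$. $D_m=\prod_{p<m}p$ over primes (empty product $=1$). $\mathbf V$ denotes variance. *)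

(* Defs.v *)
From mathcomp Require Import all_boot all_order all_algebra.
From mathcomp Require Import reals.
Set Implicit Arguments. Unset Strict Implicit. Unset Printing Implicit Defensive.
Import Order.TTheory GRing.Theory Num.Theory.
Local Open Scope ring_scope.

(* A step sequence of length N: s j = true means step j is (1,0),
   s j = false means step j is (0,1). *)
Notation steps N := {ffun 'I_N -> bool}.

Definition walk_weight (R : realType) (alpha : R) (N : nat) (s : steps N) : R :=
  \prod_(j < N) (if s j then alpha else 1 - alpha).

Definition walk_pos (N : nat) (s : steps N) (i : nat) : nat * nat :=
  ((\sum_(j < N | (j < i)%N) nat_of_bool (s j))%N,
   (\sum_(j < N | (j < i)%N) nat_of_bool (~~ s j))%N).

Definition visible (m : nat) (P : nat * nat) : bool :=
  [forall p : 'I_m, prime p ==> ~~ ((p %| P.1) && (p %| P.2))%N].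

Definition Dm (m : nat) : nat := (\prod_(p < m | prime p) p)%N.

Definition Xv (R : realType) (m N : nat) (s : steps N) (i : nat) : R :=
  (visible m (walk_pos s i))%:R.

Definition Yv (R : realType) (k m N : nat) (s : steps N) (i : nat) : R :=
  \prod_(t < k) Xv R m s (i + t).

(* \bar S_{n,k}(m) = (1/n) sum_{i=1}^n Y_i(m), as a random variable on the
   first n + k steps (enough: it depends on P_1, ..., P_{n+k-1}). *)
Definition Sbar (R : realType) (n k m : nat) (s : steps (n + k)) : R :=
  n%:R^-1 * \sum_(1 <= i < n.+1) Yv R k m s i.

Definition Expect (R : realType) (alpha : R) (N : nat) (f : steps N -> R) : R :=
  \sum_(s : steps N) walk_weight alpha s * f s.

Definition Var (R : realType) (alpha : R) (N : nat) (f : steps N -> R) : R :=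
  Expect alpha (fun s => (f s - Expect alpha f) ^+ 2).

(* Main.v *)
Require Import Defs.
From mathcomp Require Import all_boot all_order all_algebra.
From mathcomp Require Import reals.
From mathcomp Require Import lra ring zify.
Set Warnings "-notation-overridden,-ambiguous-paths".
Set Implicit Arguments. Unset Strict Implicit. Unset Printing Implicit Defensive.
Import Order.TTheory GRing.Theory Num.Theory.
Local Open Scope ring_scope.

Definition at_ (M : nat) (u : steps M) (i : nat) : bool :=
  if insub i is Some o then u o else false.

Lemma at_ord M (u : steps M) (o : 'I_M) : at_ u o = u o.
Proof. by rewrite /at_ valK. Qed.

Lemma at_ge M (u : steps M) i : (M <= i)%N -> at_ u i = false.
Proof. by move=> h; rewrite /at_ insubF // ltnNge h. Qed.

Definition glue (N M L : nat) (u : steps M) (v : steps L) : steps N :=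
  [ffun o : 'I_N => if (o < M)%N then at_ u o else at_ v (o - M)].

Lemma at_glue N M L (u : steps M) (v : steps L) i : (M + L = N)%N ->
  at_ (glue N u v) i = if (i < M)%N then at_ u i else at_ v (i - M).
Proof.
move=> e; case: (ltnP i N) => hi.
  by rewrite -[i]/(nat_of_ord (Ordinal hi)) at_ord ffunE.
rewrite at_ge //; case: ifP => h; first by rewrite at_ge //; lia.
by rewrite at_ge //; lia.
Qed.

Definition proj1s N M (s : steps N) : steps M := [ffun o : 'I_M => at_ s o].
Definition proj2s N M L (s : steps N) : steps L := [ffun o : 'I_L => at_ s (o + M)].

Lemma split_sum (V : nmodType) N M L (F : steps N -> V) : (M + L = N)%N ->
  \sum_(s : steps N) F s = \sum_(u : steps M) \sum_(v : steps L) F (glue N u v).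
Proof.
move=> e; rewrite pair_big /=.
rewrite (reindex (fun p : steps M * steps L => glue N p.1 p.2)) //.
exists (fun s => (proj1s M s, proj2s M L s)) => [[u v] _|s _] /=.
  congr pair; apply/ffunP => o; rewrite ffunE at_glue //.
    by rewrite ltn_ord at_ord.
  by rewrite ltnNge leq_addl /= addnK at_ord.
apply/ffunP => o; rewrite ffunE; case: ifP => h.
  by rewrite -[nat_of_ord o]/(nat_of_ord (Ordinal h)) at_ord ffunE at_ord.
case: (ltnP (o - M) L) => h2.
  rewrite -[(o - M)%N]/(nat_of_ord (Ordinal h2)) at_ord ffunE /= subnK ?at_ord //.
  by rewrite leqNgt h.
by rewrite at_ge //; move: (ltn_ord o); lia.
Qed.

Section W.
Variable R : realType.
Variable alpha : R.

Definition wt (b : bool) : R := if b then alpha else 1 - alpha.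

Lemma wwE N (s : steps N) :
  walk_weight alpha s = \prod_(0 <= l < N) wt (at_ s l).
Proof.
rewrite /walk_weight big_mkord; apply: eq_bigr => o _; by rewrite at_ord.
Qed.

Lemma ww_glue N M L (u : steps M) (v : steps L) : (M + L = N)%N ->
  walk_weight alpha (glue N u v) = walk_weight alpha u * walk_weight alpha v.
Proof.
move=> e; rewrite !wwE (big_cat_nat (leq0n M) (_ : M <= N)%N); last by lia.
congr (_ * _).
  by apply: eq_big_nat => l /andP[_ h]; rewrite at_glue // h.
rewrite -{1}[M]add0n big_addn (_ : N - M = L)%N; last by lia.
apply: eq_big_nat => l _.
rewrite at_glue // ifF ?addnK //; lia.
Qed.

Lemma ww_sum N : \sum_(s : steps N) walk_weight alpha s = 1.
Proof.
rewrite /walk_weight -(bigA_distr_bigA (fun (j : 'I_N) (b : bool) => if b then alpha else 1 - alpha)).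
rewrite big1 // => j _; rewrite big_bool /=; ring.
Qed.

Hypothesis a01 : 0 < alpha < 1.

Lemma wt_ge0 b : 0 <= wt b.
Proof. case/andP: a01 => h1 h2; rewrite /wt; case: b; lra. Qed.

Lemma ww_ge0 N (s : steps N) : 0 <= walk_weight alpha s.
Proof. by rewrite /walk_weight; apply: prodr_ge0 => j _; apply: (wt_ge0 (s j)). Qed.

End W.

Definition cnt (f : nat -> bool) (a b : nat) : nat := (\sum_(a <= l < b) nat_of_bool (f l))%N.

Lemma cnt_split f a b c : (a <= b <= c)%N -> cnt f a c = (cnt f a b + cnt f b c)%N.
Proof. by case/andP => h1 h2; rewrite /cnt (big_cat_nat h1 h2). Qed.

Lemma cnt_le f a b : (cnt f a b <= b - a)%N.
Proof.
rewrite /cnt; apply: leq_trans (_ : \sum_(a <= l < b) 1 <= _)%N.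
  by apply: leq_sum => l _; case: (f l).
by rewrite sum_nat_const_nat muln1.
Qed.

Lemma cnt_ext f g a b : (forall l, (a <= l < b)%N -> f l = g l) -> cnt f a b = cnt g a b.
Proof. by move=> h; apply: eq_big_nat => l /h ->. Qed.

Lemma cnt_shift f a b c : cnt f (a + c) (b + c) = cnt (fun l => f (l + c)%N) a b.
Proof. by rewrite /cnt big_addn addnK. Qed.

Lemma sum_steps1 (V : nmodType) (F : steps 1 -> V) :
  \sum_(u : steps 1) F u = F [ffun => true] + F [ffun => false].
Proof.
rewrite (reindex (fun b : bool => [ffun => b])) /=.
  by rewrite big_bool.
exists (fun u : steps 1 => u ord0) => [b _|u _]; first by rewrite ffunE.
by apply/ffunP => o; rewrite ffunE (ord1 o).
Qed.

Section Bin.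
Variable R : realType.
Variable alpha : R.

Definition bin (L x : nat) : R := ('C(L, x))%:R * alpha ^+ x * (1 - alpha) ^+ (L - x).

Lemma binR_small L x : (L < x)%N -> bin L x = 0.
Proof. by move=> h; rewrite /bin bin_small // mul0r mul0r. Qed.

Lemma bin0R L : bin L 0 = (1 - alpha) ^+ L.
Proof. by rewrite /bin bin0 subn0 expr0 mulr1 mul1r. Qed.

Lemma binS' L x : bin L.+1 x.+1 = alpha * bin L x + (1 - alpha) * bin L x.+1.
Proof.
rewrite /bin binS natrD subSS.
case: (ltnP x L) => h.
  rewrite (_ : (L - x = (L - x.+1).+1)%N); last by lia.
  rewrite !exprS; ring.
rewrite (bin_small (_ : L < x.+1)%N) //; rewrite (_ : (L - x.+1 = L - x)%N); last by lia.
rewrite exprS; ring.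
Qed.

Lemma bin_rep L (G : nat -> R) :
  \sum_(v : steps L) walk_weight alpha v * G (cnt (at_ v) 0 L) =
  \sum_(0 <= x < L.+1) bin L x * G x.
Proof.
elim: L G => [|L IH] G.
  rewrite big_nat1 /bin bin0 expr0 !mulr1 /cnt.
  rewrite (eq_bigr (fun _ => G 0%N)); last first.
    by move=> s _; rewrite /walk_weight big_ord0 big_geq // mul1r.
  by rewrite sumr_const card_ffun card_ord /= expn0 mul1r.
rewrite (split_sum _ (M := 1) (L := L)) // sum_steps1.
have cE b (v : steps L) : cnt (at_ (glue L.+1 ([ffun => b] : steps 1) v)) 0 L.+1 = (b + cnt (at_ v) 0 L)%N.
  rewrite (@cnt_split _ 0 1 L.+1) //; congr addn.
    have := at_ord [ffun=> b] (@ord0 0); rewrite ffunE /= => h0.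
    by rewrite /cnt big_nat1 at_glue //= h0.
  have := cnt_shift (at_ (glue L.+1 ([ffun => b] : steps 1) v)) 0 L 1.
  rewrite add0n addn1 => ->; apply: cnt_ext => l _.
  by rewrite at_glue // addn1 /= subn1.
under eq_bigr do rewrite ww_glue // cE.
under [X in _ + X]eq_bigr do rewrite ww_glue // cE.
have w1 b : walk_weight alpha ([ffun => b] : steps 1) = wt alpha b.
  by rewrite /walk_weight big_ord1 ffunE.
rewrite !w1 /=.
under eq_bigr do rewrite -mulrA.
under [X in _ + X]eq_bigr do rewrite -mulrA.
rewrite -!mulr_sumr (IH (fun x => G x.+1)) (IH G).
rewrite big_nat_recl // bin0R.
under eq_big_nat do rewrite binS' mulrDl.
rewrite big_split /=.
rewrite [X in _ = _ + (_ + X)]big_nat_recr //= binR_small // mulr0 mul0r addr0.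
rewrite [X in _ + _ * X = _]big_nat_recl // bin0R.
under [X in _ = _ + (X + _)]eq_big_nat do rewrite -mulrA.
under [X in _ = _ + (_ + X)]eq_big_nat do rewrite -mulrA.
rewrite -!mulr_sumr /wt exprS; ring.
Qed.
End Bin.

Section Delta.
Variable R : realType.
Variable alpha : R.
Hypothesis a01 : 0 < alpha < 1.
Local Notation b := (bin alpha).

Lemma bin_sum1 L : \sum_(0 <= x < L.+1) b L x = 1.
Proof.
have := bin_rep alpha L (fun _ => 1).
under eq_bigr do rewrite mulr1.
under [X in _ = X -> _]eq_big_nat do rewrite mulr1.
by rewrite ww_sum.
Qed.

Lemma bin_ge0 L x : 0 <= b L x.
Proof.
case/andP: a01 => h1 h2; rewrite /bin; apply: mulr_ge0; last by apply: exprn_ge0; lra.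
by apply: mulr_ge0; [apply: ler0n | apply: exprn_ge0; lra].
Qed.

Lemma bin_diagR L x : (x.+1)%:R * b L.+1 x.+1 = (L.+1)%:R * alpha * b L x.
Proof.
rewrite /bin !mulrA -natrM -mul_bin_diag /= natrM subSS exprS; ring.
Qed.

Lemma bin_E1 L : \sum_(0 <= x < L.+1) x%:R * b L x = L%:R * alpha.
Proof.
case: L => [|L]; first by rewrite big_nat1 !mul0r.
rewrite big_nat_recl // mul0r add0r.
under eq_big_nat do rewrite bin_diagR.
by rewrite -mulr_sumr bin_sum1 mulr1.
Qed.

Lemma bin_E2 L : \sum_(0 <= x < L.+1) x%:R * (x%:R - 1) * b L x = L%:R * (L%:R - 1) * alpha ^+ 2.
Proof.
case: L => [|L]; first by rewrite big_nat1 !mul0r.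
rewrite big_nat_recl // !mul0r add0r.
rewrite (_ : \sum_(0 <= i < L.+1) _ = L.+1%:R * alpha * \sum_(0 <= i < L.+1) i%:R * b L i).
  by rewrite bin_E1 -(natr1 L) addrK; ring.
rewrite mulr_sumr; apply: eq_big_nat => i _.
rewrite mulrAC bin_diagR -(natr1 i) addrK; ring.
Qed.

Lemma bin_var L :
  \sum_(0 <= x < L.+1) b L x * (x%:R - (L.+1)%:R * alpha) ^+ 2 <= (L.+1)%:R.
Proof.
set c := (L.+1)%:R * alpha.
have -> : \sum_(0 <= x < L.+1) b L x * (x%:R - c) ^+ 2 =
  \sum_(0 <= x < L.+1) x%:R * (x%:R - 1) * b L x + (1 - 2 * c) * \sum_(0 <= x < L.+1) x%:R * b L x
  + c ^+ 2 * \sum_(0 <= x < L.+1) b L x.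
  rewrite !mulr_sumr -!big_split /=; apply: eq_big_nat => x _; ring.
rewrite bin_E2 bin_E1 bin_sum1 /c -natr1.
case/andP: a01 => h1 h2.
have hL : 0 <= L%:R :> R by apply: ler0n.
nra.
Qed.

End Delta.

Lemma bern (R : realType) (a : R) L : 0 < a < 1 -> a ^+ L <= 1 / ((1 - a) * (L.+1)%:R).
Proof.
case/andP=> h1 h2.
have H : a ^+ L * (1 + L%:R * (1 - a)) <= 1.
  elim: L => [|L IH]; first by rewrite expr0 mul0r addr0 mulr1.
  apply: le_trans IH.
  have hL : 0 <= L%:R :> R by apply: ler0n.
  have ha : 0 <= a ^+ L by apply: exprn_ge0; lra.
  rewrite exprS -natr1.
  have hh : 0 <= (1 - a) * (1 - a) * (L%:R + 1).
    by apply: mulr_ge0; [apply: mulr_ge0|]; lra.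
  have : a * (1 + (L%:R + 1) * (1 - a)) <= 1 + L%:R * (1 - a) by lra.
  move=> h; rewrite -mulrA mulrCA; apply: ler_wpM2l => //.
have hL : 0 <= L%:R :> R by apply: ler0n.
have hp : 0 < (1 - a) * (L.+1)%:R by apply: mulr_gt0; [lra | apply: ltr0Sn].
rewrite ler_pdivlMr //; apply: le_trans H.
have ha : 0 <= a ^+ L by apply: exprn_ge0; lra.
apply: ler_wpM2l => //; rewrite -natr1; nra.
Qed.

Lemma inv2_le (R : realType) (d y : R) : 1 <= d -> 0 <= y -> y / d ^+ 2 <= 2 * y / (d * (d + 1)).
Proof.
move=> hd hy; rewrite -subr_ge0.
have -> : 2 * y / (d * (d + 1)) - y / d ^+ 2 = y * (d - 1) / (d ^+ 2 * (d + 1)).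
  by field; apply/andP; split; apply/negP => /eqP; lra.
apply: divr_ge0; first by apply: mulr_ge0 => //; lra.
by apply: mulr_ge0; [apply: exprn_ge0 | ]; lra.
Qed.

Section Delta2.
Variable R : realType.
Variable alpha : R.
Hypothesis a01 : 0 < alpha < 1.
Local Notation b := (bin alpha).

Lemma bin_inv2 L :
  \sum_(0 <= x < L.+1) b L x / ((L.+1 - x)%:R) ^+ 2 <=
  2 / ((L.+1)%:R * (L.+2)%:R * (1 - alpha) ^+ 2).
Proof.
case/andP: a01 => h1 h2.
have hK : 0 < (L.+1)%:R * (L.+2)%:R * (1 - alpha) ^+ 2 :> R.
  by apply: mulr_gt0; [apply: mulr_gt0; apply: ltr0Sn | apply: exprn_gt0; lra].
apply: le_trans (_ : \sum_(0 <= x < L.+1) 2 / ((L.+1)%:R * (L.+2)%:R * (1 - alpha) ^+ 2) * b L.+2 x <= _).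
  apply: ler_sum_nat => x /andP[_ hx].
  have H : ((L.+1 - x) * (L.+2 - x) * 'C(L.+2, x) = L.+2 * L.+1 * 'C(L, x))%N.
    have e1 := mul_bin_down L.+2 x; have e2 := mul_bin_down L.+1 x; simpl in e1, e2.
    rewrite -mulnA -e1 mulnCA -e2; ring.
  have HR : ((L.+1 - x)%:R * ((L.+1 - x)%:R + 1) * ('C(L.+2, x))%:R =
            (L.+2)%:R * (L.+1)%:R * ('C(L, x))%:R :> R).
    by rewrite (natr1 (L.+1 - x)) -!natrM (_ : (L.+1 - x).+1 = L.+2 - x)%N ?H //; lia.
  have hd : 1 <= (L.+1 - x)%:R :> R by rewrite ler1n; lia.
  apply: le_trans (inv2_le hd (bin_ge0 a01 L x)) _.
  rewrite /bin (_ : (L.+2 - x = (L - x).+2)%N); last by lia.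
  rewrite (_ : (1 - alpha) ^+ (L - x).+2 = (1 - alpha) ^+ 2 * (1 - alpha) ^+ (L - x)); last first.
    by rewrite -exprD addnC addn2.
  set c := ('C(L, x))%:R; set c2 := ('C(L.+2, x))%:R; set d := (L.+1 - x)%:R.
  set A := alpha ^+ x * (1 - alpha) ^+ (L - x).
  have hA : 0 <= A by apply: mulr_ge0; apply: exprn_ge0; lra.
  have hc : c = d * (d + 1) * c2 / ((L.+2)%:R * (L.+1)%:R).
    have hL : 0 <= L%:R :> R by apply: ler0n.
    rewrite HR; field; apply/andP; split; apply/negP => /eqP; lra.
  have hL : 0 <= L%:R :> R by apply: ler0n.
  rewrite hc le_eqVlt; apply/orP; left; apply/eqP; rewrite /A; field.
  by apply/and5P; split; apply/negP => /eqP; rewrite /d in hd; lra.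
rewrite -big_distrr /= ler_piMr //; first by apply: divr_ge0; [lra | apply: ltW].
rewrite -(@bin_sum1 _ alpha L.+2) [in X in _ <= X](big_cat_nat (n := L.+1)) //=; last by apply: leqW; apply: leqW.
rewrite -[X in X <= _]addr0 lerD2l.
by apply: sumr_ge0 => x _; apply: bin_ge0.
Qed.

End Delta2.

Lemma amgm (R : realType) (t p u w : R) : 0 < t -> 0 <= p -> 0 <= w ->
  p * (`|u| * w) <= t / 2 * (p * u ^+ 2) + 1 / (2 * t) * (p * w ^+ 2).
Proof.
move=> ht hp hw.
have hu : `|u| ^+ 2 = u ^+ 2 by rewrite real_normK // num_real.
have hn : 0 <= `|u| by [].
have H : 2 * t * (`|u| * w) <= t ^+ 2 * u ^+ 2 + w ^+ 2.
  rewrite -hu; have := sqr_ge0 (t * `|u| - w); rewrite sqrrB; nra.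
have -> : t / 2 * (p * u ^+ 2) + 1 / (2 * t) * (p * w ^+ 2) =
          p / (2 * t) * (t ^+ 2 * u ^+ 2 + w ^+ 2).
  by field; apply/negP => /eqP; lra.
have -> : p * (`|u| * w) = p / (2 * t) * (2 * t * (`|u| * w)).
  by field; apply/negP => /eqP; lra.
apply: ler_wpM2l => //; apply: divr_ge0 => //; lra.
Qed.

Section Delta3.
Variable R : realType.
Variable alpha : R.
Hypothesis a01 : 0 < alpha < 1.
Local Notation b := (bin alpha).

Lemma bin_step L x : (x < L)%N ->
  ((L - x)%:R * alpha) * (b L x.+1 - b L x) = b L x.+1 * ((L.+1)%:R * alpha - (x.+1)%:R).
Proof.
move=> hx.
have e := mul_bin_left L x.
have eR : (x.+1)%:R * ('C(L, x.+1))%:R = (L - x)%:R * ('C(L, x))%:R :> R by rewrite -!natrM e.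
have eL : (L.+1)%:R = (L - x)%:R + (x.+1)%:R :> R by rewrite -natrD; congr _%:R; lia.
rewrite /bin eL.
set D := (L - x)%:R in eR *.
rewrite (_ : (L - x = (L - x.+1).+1)%N); last by lia.
rewrite exprS.
set c0 := ('C(L, x))%:R in eR *; set c1 := ('C(L, x.+1))%:R in eR *.
apply/eqP; rewrite -subr_eq0; apply/eqP.
transitivity (alpha ^+ x.+1 * (1 - alpha) * (1 - alpha) ^+ (L - x.+1) * ((x.+1)%:R * c1 - D * c0)); first by rewrite !exprS; ring.
by rewrite eR subrr mulr0.
Qed.


Definition cdel : R := 1 / alpha + 1 / (1 - alpha) + 1 + 1 / (alpha ^+ 2 * (1 - alpha) ^+ 2).

Lemma delta_sum L :
  \sum_(0 <= x < L) `|b L x - b L x.+1| <=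
  1 / (2 * Num.sqrt (L.+1)%:R) +
  Num.sqrt (L.+1)%:R / ((L.+2)%:R * alpha ^+ 2 * (1 - alpha) ^+ 2).
Proof.
case/andP: a01 => h1 h2.
set S : R := (L.+1)%:R; set s : R := Num.sqrt S.
have hS : 1 <= S by rewrite /S ler1n.
have hs : 0 < s by rewrite /s sqrtr_gt0; lra.
have hss : s * s = S by rewrite -expr2 sqr_sqrtr //; lra.
set t : R := 1 / (s * S).
have ht : 0 < t by apply: divr_gt0; [lra | apply: mulr_gt0 => //; lra].
have step x : (x < L)%N -> `|b L x - b L x.+1| <=
   t / 2 * (b L x.+1 * ((x.+1)%:R - S * alpha) ^+ 2) +
   1 / (2 * t) * (b L x.+1 * (1 / ((L - x)%:R * alpha)) ^+ 2).
  move=> hx.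
  have hD : 0 < (L - x)%:R * alpha by apply: mulr_gt0 => //; rewrite ltr0n subn_gt0.
  have E := bin_step hx.
  have -> : `|b L x - b L x.+1| = b L x.+1 * (`|x.+1%:R - S * alpha| * (1 / ((L - x)%:R * alpha))).
    rewrite -normrN opprB.
    have -> : b L x.+1 - b L x = b L x.+1 * (S * alpha - x.+1%:R) / ((L - x)%:R * alpha).
      rewrite -E /S; field; apply/andP; split; first by apply: lt0r_neq0.
      by rewrite pnatr_eq0 -lt0n subn_gt0.
    rewrite normrM normrM ger0_norm ?(bin_ge0 a01) // -normrN opprB.
    rewrite ger0_norm; first by rewrite mul1r mulrA.
    by rewrite invr_ge0 ltW.
  apply: amgm => //; first by apply: bin_ge0.
  by apply: divr_ge0 => //; apply: ltW.
apply: le_trans (ler_sum_nat (fun x hx => step x (proj2 (andP hx)))) _.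
rewrite big_split /= -!mulr_sumr.
have V1 : \sum_(0 <= i < L) b L i.+1 * (i.+1%:R - S * alpha) ^+ 2 <= S.
  apply: le_trans (bin_var a01 L); rewrite -/S big_nat_recl // -[X in X <= _]add0r lerD2r.
  by apply: mulr_ge0; [apply: bin_ge0 | apply: sqr_ge0].
have V2 : \sum_(0 <= i < L) b L i.+1 * (1 / ((L - i)%:R * alpha)) ^+ 2 <=
          1 / alpha ^+ 2 * (2 / (S * (L.+2)%:R * (1 - alpha) ^+ 2)).
  apply: le_trans (_ : 1 / alpha ^+ 2 * \sum_(0 <= i < L.+1) b L i / ((L.+1 - i)%:R) ^+ 2 <= _).
    rewrite big_nat_recl // mulrDr -[X in X <= _]add0r; apply: lerD.
      apply: mulr_ge0; first by apply: divr_ge0 => //; apply: exprn_ge0; lra.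
      by apply: divr_ge0; [apply: bin_ge0 | apply: exprn_ge0].
    rewrite mulr_sumr; apply: ler_sum_nat => i /andP[_ hi].
    rewrite subSS le_eqVlt; apply/orP; left; apply/eqP.
    have hD : (L - i)%:R != 0 :> R by rewrite pnatr_eq0 -lt0n subn_gt0.
    by field; apply/andP; split => //; apply: lt0r_neq0.
  apply: ler_wpM2l; first by apply: divr_ge0 => //; apply: exprn_ge0; lra.
  by apply: bin_inv2.
have ht2 : 0 <= t / 2 by apply: divr_ge0; lra.
have ht3 : 0 <= 1 / (2 * t) by apply: divr_ge0; lra.
apply: le_trans (lerD (ler_wpM2l ht2 V1) (ler_wpM2l ht3 V2)) _.
rewrite le_eqVlt; apply/orP; left; apply/eqP.
have hL2 : 0 < (L.+2)%:R :> R by apply: ltr0Sn.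
have hL : 0 <= L%:R :> R by apply: ler0n.
by rewrite /t; field; apply/and5P; split; apply/negP => /eqP; lra.
Qed.

Lemma final_arith (a c s T : R) : 0 < a -> 0 < c -> 1 <= s -> T = s * s + 1 ->
  1 / (c * (s * s)) + 1 / (a * (s * s)) + 1 / (2 * s) + s / (T * a ^+ 2 * c ^+ 2) <=
  (1 / a + 1 / c + 1 + 1 / (a ^+ 2 * c ^+ 2)) / s.
Proof.
move=> ha hc hs ->.
have hs0 : 0 < s by lra.
set X := 1 / c; set Y := 1 / a; set Z := 1 / (a ^+ 2 * c ^+ 2); set i := 1 / s.
set q := s * s / (s * s + 1).
have hX : 0 <= X by apply: divr_ge0; lra.
have hY : 0 <= Y by apply: divr_ge0; lra.
have hZ : 0 <= Z by apply: divr_ge0; [lra | apply: mulr_ge0; apply: exprn_ge0; lra].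
have hi0 : 0 <= i by apply: divr_ge0; lra.
have hi1 : i <= 1 by rewrite /i ler_pdivrMr //; lra.
have hss : 0 < s * s + 1 by nra.
have hq1 : q <= 1 by rewrite /q ler_pdivrMr //; lra.
have hq0 : 0 <= q by apply: divr_ge0; nra.
have e1 : 1 / (c * (s * s)) = X * (i * i) by rewrite /X /i; field; apply/andP; split; apply/negP => /eqP; lra.
have e2 : 1 / (a * (s * s)) = Y * (i * i) by rewrite /Y /i; field; apply/andP; split; apply/negP => /eqP; lra.
have e3 : 1 / (2 * s) = i / 2 by rewrite /i; field; apply/negP => /eqP; lra.
have e4 : s / ((s * s + 1) * a ^+ 2 * c ^+ 2) = Z * (i * q).
  rewrite /Z /i /q; field; apply/and4P; split; apply/negP => /eqP; lra.
have e5 : (1 / a + 1 / c + 1 + 1 / (a ^+ 2 * c ^+ 2)) / s = (Y + X + 1 + Z) * i.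
  by rewrite /i /X /Y /Z [1 / s]mul1r.
rewrite e1 e2 e3 e4 e5.
have k1 : 0 <= X * i * (1 - i) by apply: mulr_ge0; [apply: mulr_ge0|]; lra.
have k2 : 0 <= Y * i * (1 - i) by apply: mulr_ge0; [apply: mulr_ge0|]; lra.
have k3 : 0 <= Z * i * (1 - q) by apply: mulr_ge0; [apply: mulr_ge0|]; lra.
lra.
Qed.

Lemma delta_bound L (G : nat -> R) : (forall x, 0 <= G x <= 1) ->
  `|\sum_(0 <= x < L.+1) b L x * (G x.+1 - G x)| <= cdel / Num.sqrt (L.+1)%:R.
Proof.
move=> hG.
case/andP: a01 => h1 h2.
have -> : \sum_(0 <= x < L.+1) b L x * (G x.+1 - G x) =
  b L L * G L.+1 - b L 0 * G 0%N + \sum_(0 <= x < L) (b L x - b L x.+1) * G x.+1.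
  under eq_big_nat do rewrite mulrBr.
  rewrite sumrB big_nat_recr //= [X in _ - X]big_nat_recl //=.
  under [X in _ = _ + X]eq_big_nat do rewrite mulrBl.
  rewrite sumrB /=; ring.
have hb x : 0 <= b L x by apply: bin_ge0.
have hG0 x : 0 <= G x by case/andP: (hG x).
have hG1 x : `|G x| <= 1 by rewrite ger0_norm //; case/andP: (hG x).
apply: le_trans (ler_normD _ _) _.
apply: le_trans (lerD (ler_normD _ _) (ler_norm_sum _ _ _)) _.
rewrite normrN (normrM (b L L)) (normrM (b L 0%N)) (ger0_norm (hb L)) (ger0_norm (hb 0%N)).
under eq_big_nat do rewrite normrM.
have B1 : b L L * `|G L.+1| <= 1 / ((1 - alpha) * (L.+1)%:R).
  apply: le_trans (ler_piMr (hb L) (hG1 _)) _.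
  by rewrite /bin binn subnn expr0 mulr1 mulr1n mul1r; apply: bern.
have B2 : b L 0 * `|G 0%N| <= 1 / (alpha * (L.+1)%:R).
  apply: le_trans (ler_piMr (hb 0%N) (hG1 _)) _.
  rewrite bin0R; have := @bern _ (1 - alpha) L; rewrite (_ : 1 - (1 - alpha) = alpha); last by ring.
  by apply; lra.
have B3 : \sum_(0 <= i < L) `|b L i - b L i.+1| * `|G i.+1| <= \sum_(0 <= i < L) `|b L i - b L i.+1|.
  by apply: ler_sum_nat => i _; apply: ler_piMr.
apply: le_trans (lerD (lerD B1 B2) (le_trans B3 (delta_sum L))) _.
set s := Num.sqrt (L.+1)%:R.
have hss : s * s = (L.+1)%:R by rewrite -expr2 sqr_sqrtr // ler0n.
have hs : 1 <= s.
  have h0 : 0 <= s by apply: sqrtr_ge0.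
  have h1' : 1 <= (L.+1)%:R :> R by rewrite ler1n.
  nra.
rewrite -hss /cdel -!addrA addrA.
have := final_arith h1 (_ : 0 < 1 - alpha) hs (_ : (L.+2)%:R = s * s + 1).
rewrite -!addrA; apply; first by lra.
by rewrite hss -natr1.
Qed.
End Delta3.

Lemma Dm_gt0 m : (0 < Dm m)%N.
Proof. by rewrite /Dm; apply: prodn_cond_gt0 => p /prime_gt0. Qed.

Lemma dvd_Dm m p : prime p -> (p < m)%N -> (p %| Dm m)%N.
Proof.
move=> pp pm; rewrite /Dm (bigD1 (Ordinal pm)) //=; exact: dvdn_mulr.
Qed.

Lemma vis_mod m a1 b1 a2 b2 :
  a1 = a2 %[mod Dm m] -> b1 = b2 %[mod Dm m] -> visible m (a1, b1) = visible m (a2, b2).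
Proof.
move=> ha hb; rewrite /visible; apply: eq_forallb => p; case: (boolP (prime p)) => //= pp.
have hd := dvd_Dm pp (ltn_ord p).
have ea : a1 = a2 %[mod p] by rewrite -(modn_dvdm a1 hd) -(modn_dvdm a2 hd) ha.
have eb : b1 = b2 %[mod p] by rewrite -(modn_dvdm b1 hd) -(modn_dvdm b2 hd) hb.
by rewrite /dvdn ea eb.
Qed.

Section Y.
Variable R : realType.
Variables k m : nat.
Local Notation D := (Dm m).

Definition Yn (f : nat -> bool) (i : nat) : R :=
  \prod_(t < k) (visible m (cnt f 0 (i + t), (i + t) - cnt f 0 (i + t))%N)%:R.

Definition Kn (g : nat -> bool) (j z : nat) : R :=
  \prod_(t < k) (visible m (z + cnt g 0 t, (j + t - cnt g 0 t) + (D - 1) * z)%N)%:R.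

Lemma prod01 (I : finType) (F : I -> bool) : 0 <= (\prod_(t : I) (F t)%:R : R) <= 1.
Proof.
apply/andP; split; first by apply: prodr_ge0 => t _; apply: ler0n.
by apply: prodr_ile1 => t _; apply/andP; split; [apply: ler0n | case: (F t)].
Qed.

Lemma Yn01 f i : 0 <= Yn f i <= 1.
Proof. exact: prod01. Qed.

Lemma Kn01 g j z : 0 <= Kn g j z <= 1.
Proof. exact: prod01. Qed.

Lemma Yn_ext f g i : (forall l, (l < i + k - 1)%N -> f l = g l) -> Yn f i = Yn g i.
Proof.
move=> h; apply: eq_bigr => t _.
rewrite (@cnt_ext f g) // => l /andP[_ hl]; apply: h.
have := ltn_ord t; lia.
Qed.

Lemma Kn_ext g g' j z : (forall l, (l < k)%N -> g l = g' l) -> Kn g j z = Kn g' j z.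
Proof.
move=> h; apply: eq_bigr => t _.
rewrite (@cnt_ext g g') // => l /andP[_ hl]; apply: h.
by apply: leq_trans hl _; apply: ltnW.
Qed.

Lemma Kn_mod g j z : Kn g j z = Kn g j (z %% D).
Proof.
apply: eq_bigr => t _; rewrite (@vis_mod m _ _ ((z %% D + cnt g 0 t)%N) ((j + t - cnt g 0 t + (D - 1) * (z %% D))%N)) //.
  by rewrite modnDml.
by rewrite -[RHS]modnDmr modnMmr modnDmr.
Qed.

Lemma Yn_K f j : Yn f j = Kn (fun l => f (j + l)%N) j (cnt f 0 j).
Proof.
apply: eq_bigr => t _.
have e1 : cnt f 0 (j + t) = (cnt f 0 j + cnt (fun l => f (j + l)%N) 0 t)%N.
  rewrite (@cnt_split _ 0 j) ?leq_addr //; congr addn.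
  have := cnt_shift f 0 t j; rewrite add0n addnC => ->.
  by apply: cnt_ext => l _; rewrite addnC.
rewrite e1.
set a := cnt f 0 j; set c := cnt (fun l => f (j + l)%N) 0 t.
have hle : (a + c <= j + t)%N by rewrite -e1 (leq_trans (cnt_le _ _ _)) // subn0.
have hD := Dm_gt0 m.
have E : (j + t - c + (D - 1) * a = a * D + (j + t - (a + c)))%N.
  rewrite mulnBl mul1n mulnC.
  have : (a <= D * a)%N by rewrite leq_pmull.
  lia.
rewrite (@vis_mod m _ _ (a + c)%N (j + t - c + (D - 1) * a)%N) //.
by rewrite E modnMDl.
Qed.

End Y.

Lemma cov_generic (R : realType) (I : finType) (a y h : I -> R) (c e : R) :
  (forall u, 0 <= a u) -> \sum_u a u = 1 -> (forall u, 0 <= y u <= 1) ->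
  (forall u, `|h u - c| <= e) ->
  `|\sum_u a u * (y u * h u) - (\sum_u a u * y u) * (\sum_u a u * h u)| <= 2 * e.
Proof.
move=> ha hs hy hh.
have -> : \sum_u a u * (y u * h u) - (\sum_u a u * y u) * (\sum_u a u * h u) =
  \sum_u a u * (y u * (h u - c)) - (\sum_u a u * y u) * (\sum_u a u * (h u - c)).
  have E1 : \sum_u a u * (y u * (h u - c)) = \sum_u a u * (y u * h u) - c * \sum_u a u * y u.
    rewrite mulr_sumr -sumrB; apply: eq_bigr => u _; ring.
  have E2 : \sum_u a u * (h u - c) = \sum_u a u * h u - c * \sum_u a u.
    rewrite mulr_sumr -sumrB; apply: eq_bigr => u _; ring.
  rewrite E1 E2 hs; ring.
have A1 : `|\sum_u a u * (y u * (h u - c))| <= e.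
  apply: le_trans (ler_norm_sum _ _ _) _.
  apply: le_trans (_ : \sum_u a u * e <= _); last by rewrite -mulr_suml hs mul1r.
  apply: ler_sum => u _; rewrite normrM (ger0_norm (ha u)); apply: ler_wpM2l => //.
  rewrite normrM; case/andP: (hy u) => y0 y1.
  by rewrite (ger0_norm y0); apply: le_trans (hh u); apply: ler_piMl.
have A2 : `|\sum_u a u * (h u - c)| <= e.
  apply: le_trans (ler_norm_sum _ _ _) _.
  apply: le_trans (_ : \sum_u a u * e <= _); last by rewrite -mulr_suml hs mul1r.
  by apply: ler_sum => u _; rewrite normrM (ger0_norm (ha u)); apply: ler_wpM2l.
have A3 : `|\sum_u a u * y u| <= 1.
  rewrite ger0_norm; last by apply: sumr_ge0 => u _; apply: mulr_ge0 => //; case/andP: (hy u).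
  rewrite -hs; apply: ler_sum => u _; apply: ler_piMr => //; by case/andP: (hy u).
apply: le_trans (ler_normD _ _) _; rewrite normrN normrM mulr2n mulrDl mul1r; apply: lerD => //.
by apply: le_trans A2; apply: ler_piMl.
Qed.

Section Cov.
Variable R : realType.
Variable alpha : R.
Hypothesis a01 : 0 < alpha < 1.
Variables k m : nat.
Local Notation D := (Dm m).
Local Notation ww := (walk_weight alpha).

Lemma expect_split3 N M1 L1 L2 (F : steps N -> R) : (M1 + (L1 + L2) = N)%N ->
  Expect alpha F = \sum_(u : steps M1) ww u *
    \sum_(v1 : steps L1) \sum_(v2 : steps L2) ww v1 * ww v2 *
       F (glue N u (glue (L1 + L2) v1 v2)).
Proof.
move=> e; rewrite /Expect (split_sum _ e); apply: eq_bigr => u _.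
rewrite (split_sum _ (erefl (L1 + L2)%N)) mulr_sumr; apply: eq_bigr => v1 _.
rewrite mulr_sumr; apply: eq_bigr => v2 _.
by rewrite !ww_glue //; ring.
Qed.

Lemma at_glue3 N M1 L1 L2 (u : steps M1) (v1 : steps L1) (v2 : steps L2) l :
  (M1 + (L1 + L2) = N)%N ->
  at_ (glue N u (glue (L1 + L2) v1 v2)) l =
  if (l < M1)%N then at_ u l else if (l - M1 < L1)%N then at_ v1 (l - M1) else at_ v2 (l - M1 - L1).
Proof. by move=> e; rewrite at_glue // at_glue. Qed.

Lemma sum_ww2 L1 L2 : \sum_(v1 : steps L1) \sum_(v2 : steps L2) ww v1 * ww v2 = 1.
Proof.
rewrite -(ww_sum alpha L1); apply: eq_bigr => v1 _.
by rewrite -mulr_sumr ww_sum mulr1.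
Qed.

Definition Hf (j L1 L2 r : nat) : R :=
  \sum_(v1 : steps L1) \sum_(v2 : steps L2) ww v1 * ww v2 *
     Kn R k m (at_ v2) j (r + cnt (at_ v1) 0 L1).

Lemma Hf_mod j L1 L2 r : Hf j L1 L2 r = Hf j L1 L2 (r %% D).
Proof.
apply: eq_bigr => v1 _; apply: eq_bigr => v2 _; congr (_ * _).
by rewrite Kn_mod [in RHS]Kn_mod modnDml.
Qed.

Lemma Hf_step j L1 L2 r :
  `|Hf j L1 L2 r.+1 - Hf j L1 L2 r| <= cdel alpha / Num.sqrt (L1.+1)%:R.
Proof.
rewrite /Hf -sumrB.
rewrite (eq_bigr (fun v1 => \sum_(v2 : steps L2) ww v1 * (ww v2 *
   (Kn R k m (at_ v2) j (r.+1 + cnt (at_ v1) 0 L1) - Kn R k m (at_ v2) j (r + cnt (at_ v1) 0 L1))))); last first.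
  by move=> v1 _; rewrite -sumrB; apply: eq_bigr => v2 _; ring.
rewrite exchange_big /=.
apply: le_trans (ler_norm_sum _ _ _) _.
apply: le_trans (_ : \sum_(v2 : steps L2) ww v2 * (cdel alpha / Num.sqrt (L1.+1)%:R) <= _); last first.
  by rewrite -mulr_suml ww_sum mul1r.
apply: ler_sum => v2 _.
have -> : \sum_(v1 : steps L1) ww v1 * (ww v2 * (Kn R k m (at_ v2) j (r.+1 + cnt (at_ v1) 0 L1) -
       Kn R k m (at_ v2) j (r + cnt (at_ v1) 0 L1))) =
   ww v2 * \sum_(0 <= x < L1.+1) bin alpha L1 x *
      (Kn R k m (at_ v2) j (r + x.+1) - Kn R k m (at_ v2) j (r + x)).
  rewrite -(bin_rep alpha L1 (fun x => Kn R k m (at_ v2) j (r + x.+1) - Kn R k m (at_ v2) j (r + x))).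
  rewrite mulr_sumr; apply: eq_bigr => v1 _; rewrite addnS addSn; ring.
rewrite normrM ger0_norm; last by apply: ww_ge0.
apply: ler_wpM2l; first by apply: ww_ge0.
apply: delta_bound => // x; exact: Kn01.
Qed.

Lemma Hf_bound j L1 L2 r :
  `|Hf j L1 L2 r - Hf j L1 L2 0| <= D%:R * (cdel alpha / Num.sqrt (L1.+1)%:R).
Proof.
set d := cdel alpha / _.
have hd : 0 <= d by apply: le_trans (Hf_step j L1 L2 0).
have H q : `|Hf j L1 L2 q - Hf j L1 L2 0| <= q%:R * d.
  elim: q => [|q IH]; first by rewrite subrr normr0 mul0r.
  rewrite -natr1 mulrDl mul1r.
  have -> : Hf j L1 L2 q.+1 - Hf j L1 L2 0 = (Hf j L1 L2 q - Hf j L1 L2 0) + (Hf j L1 L2 q.+1 - Hf j L1 L2 q) by ring.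
  by apply: le_trans (ler_normD _ _) _; apply: lerD => //; apply: Hf_step.
rewrite Hf_mod; apply: le_trans (H _) _; apply: ler_wpM2r => //.
by rewrite ler_nat ltnW // ltn_pmod // Dm_gt0.
Qed.


Lemma cov_far N i j : (1 <= k)%N -> (i + k - 1 <= j)%N -> (j + k <= N.+1)%N ->
  `|Expect alpha (fun s : steps N => Yn R k m (at_ s) i * Yn R k m (at_ s) j) -
    Expect alpha (fun s : steps N => Yn R k m (at_ s) i) *
    Expect alpha (fun s : steps N => Yn R k m (at_ s) j)| <=
  2 * (D%:R * (cdel alpha / Num.sqrt ((j - (i + k - 1)).+1)%:R)).
Proof.
move=> hk hij hjN.
set M1 := (i + k - 1)%N; set L1 := (j - M1)%N; set L2 := (N - j)%N.
have e : (M1 + (L1 + L2) = N)%N by rewrite /L1 /L2 /M1; lia.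
have hYi (u : steps M1) (v1 : steps L1) (v2 : steps L2) : Yn R k m (at_ (glue N u (glue (L1 + L2) v1 v2))) i = Yn R k m (at_ u) i.
  by apply: Yn_ext => l hl; rewrite at_glue3 // hl.
have hYj (u : steps M1) (v1 : steps L1) (v2 : steps L2) : Yn R k m (at_ (glue N u (glue (L1 + L2) v1 v2))) j =
    Kn R k m (at_ v2) j (cnt (at_ u) 0 M1 + cnt (at_ v1) 0 L1).
  rewrite Yn_K; rewrite (@Kn_ext _ _ _ _ (at_ v2)); last first.
    move=> l hl /=; rewrite at_glue3 // ifF; last by rewrite /M1 /L1 in hij *; lia.
    rewrite ifF; last by rewrite /M1 /L1 in hij *; lia.
    congr at_; rewrite /M1 /L1 in hij *; lia.
  congr Kn; rewrite (@cnt_split _ 0 M1 j) ?leq0n //; congr addn.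
    by apply: cnt_ext => l /andP[_ hl]; rewrite at_glue3 // hl.
  have := cnt_shift (at_ (glue N u (glue (L1 + L2) v1 v2))) 0 L1 M1.
  rewrite add0n (_ : (L1 + M1 = j)%N); last by rewrite /L1; lia.
  move=> ->; apply: cnt_ext => l /andP[_ hl]; rewrite at_glue3 // ifF; last by lia.
  by rewrite addnK hl.
have E1 : Expect alpha (fun s : steps N => Yn R k m (at_ s) i * Yn R k m (at_ s) j) =
   \sum_(u : steps M1) ww u * (Yn R k m (at_ u) i * Hf j L1 L2 (cnt (at_ u) 0 M1)).
  rewrite (expect_split3 _ e); apply: eq_bigr => u _; congr (_ * _).
  rewrite /Hf mulr_sumr; apply: eq_bigr => v1 _; rewrite mulr_sumr; apply: eq_bigr => v2 _.
  by rewrite hYi hYj; ring.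
have E2 : Expect alpha (fun s : steps N => Yn R k m (at_ s) i) =
   \sum_(u : steps M1) ww u * Yn R k m (at_ u) i.
  rewrite (expect_split3 _ e); apply: eq_bigr => u _; congr (_ * _).
  rewrite -[RHS]mul1r -(sum_ww2 L1 L2) mulr_suml; apply: eq_bigr => v1 _.
  by rewrite mulr_suml; apply: eq_bigr => v2 _; rewrite hYi.
have E3 : Expect alpha (fun s : steps N => Yn R k m (at_ s) j) =
   \sum_(u : steps M1) ww u * Hf j L1 L2 (cnt (at_ u) 0 M1).
  rewrite (expect_split3 _ e); apply: eq_bigr => u _; congr (_ * _).
  by rewrite /Hf; apply: eq_bigr => v1 _; apply: eq_bigr => v2 _; rewrite hYj.
rewrite E1 E2 E3; apply: cov_generic.
- by move=> u; apply: ww_ge0.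
- by apply: ww_sum.
- by move=> u; apply: Yn01.
- by move=> u; apply: Hf_bound.
Qed.
End Cov.

Lemma sum_cond N q (F : nat -> nat) : (q <= N)%N ->
  (\sum_(j < N | (j < q)%N) F j = \sum_(0 <= j < q) F j)%N.
Proof. by move=> h; rewrite -big_ord_widen // big_mkord. Qed.

Lemma walk_posE N (s : steps N) q : (q <= N)%N ->
  walk_pos s q = (cnt (at_ s) 0 q, q - cnt (at_ s) 0 q)%N.
Proof.
move=> hq; rewrite /walk_pos.
have e1 : (\sum_(j < N | (j < q)%N) nat_of_bool (s j) = cnt (at_ s) 0 q)%N.
  rewrite (eq_bigr (fun j : 'I_N => nat_of_bool (at_ s j))); last by move=> j _; rewrite at_ord.
  by rewrite (sum_cond (fun j => nat_of_bool (at_ s j))).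
have e2 : (\sum_(j < N | (j < q)%N) nat_of_bool (~~ s j) = q - cnt (at_ s) 0 q)%N.
  rewrite (eq_bigr (fun j : 'I_N => nat_of_bool (~~ at_ s j))); last by move=> j _; rewrite at_ord.
  rewrite (sum_cond (fun j => nat_of_bool (~~ at_ s j))) //.
  have : (\sum_(0 <= j < q) nat_of_bool (~~ at_ s j) + cnt (at_ s) 0 q = q)%N.
    rewrite /cnt -big_split /=.
    rewrite (eq_bigr (fun _ => 1%N)); first by rewrite sum_nat_const_nat muln1 subn0.
    by move=> j _; case: (at_ s j).
  lia.
by rewrite e1 e2.
Qed.

Lemma Yv_Yn (R : realType) k m N (s : steps N) i : (i + k <= N.+1)%N ->
  Yv R k m s i = Yn R k m (at_ s) i.
Proof.
move=> h; apply: eq_bigr => t _; rewrite /Xv walk_posE //.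
have := ltn_ord t; lia.
Qed.

Section Exp.
Variable R : realType.
Variable alpha : R.
Hypothesis a01 : 0 < alpha < 1.

Lemma Expect01 N (f : steps N -> R) : (forall s, 0 <= f s <= 1) ->
  0 <= Expect alpha f <= 1.
Proof.
move=> hf; apply/andP; split.
  apply: sumr_ge0 => s _; apply: mulr_ge0; first by apply: ww_ge0.
  by case/andP: (hf s).
rewrite -(ww_sum alpha N); apply: ler_sum => s _; apply: ler_piMr; first by apply: ww_ge0.
by case/andP: (hf s).
Qed.

Lemma cov_le1 N (f g : steps N -> R) : (forall s, 0 <= f s <= 1) -> (forall s, 0 <= g s <= 1) ->
  `|Expect alpha (fun s => f s * g s) - Expect alpha f * Expect alpha g| <= 1.
Proof.
move=> hf hg.
have h1 : 0 <= Expect alpha (fun s => f s * g s) <= 1.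
  apply: Expect01 => s; case/andP: (hf s) => ? ?; case/andP: (hg s) => ? ?.
  apply/andP; split; [apply: mulr_ge0 => // | apply: mulr_ile1 => //].
case/andP: h1 => ? ?.
case/andP: (Expect01 hf) => ? ?; case/andP: (Expect01 hg) => ? ?.
rewrite ler_norml; apply/andP; split.
  have : Expect alpha f * Expect alpha g <= 1 by apply: mulr_ile1.
  lra.
have : 0 <= Expect alpha f * Expect alpha g by apply: mulr_ge0.
lra.
Qed.

End Exp.

Section Pair.
Variable R : realType.
Variable alpha : R.
Hypothesis a01 : 0 < alpha < 1.
Variables k m n : nat.
Hypothesis hk : (1 <= k)%N.
Local Notation D := (Dm m).
Local Notation N := (n + k)%N.

Definition Cov (i j : nat) : R :=
  Expect alpha (fun s : steps N => Yv R k m s i * Yv R k m s j) -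
  Expect alpha (fun s : steps N => Yv R k m s i) * Expect alpha (fun s : steps N => Yv R k m s j).

Definition c2 : R := (2 * cdel alpha + 1) * Num.sqrt k%:R.

Lemma cdel_gt0 : 0 < cdel alpha.
Proof.
case/andP: a01 => h1 h2; rewrite /cdel.
have p1 : 0 < 1 / alpha by apply: divr_gt0; lra.
have p2 : 0 < 1 / (1 - alpha) by apply: divr_gt0; lra.
have p3 : 0 < 1 / (alpha ^+ 2 * (1 - alpha) ^+ 2).
  by apply: divr_gt0; [lra | apply: mulr_gt0; apply: exprn_gt0; lra].
lra.
Qed.

Lemma CovC i j : Cov i j = Cov j i.
Proof.
rewrite /Cov mulrC; congr (_ - _); apply: eq_bigr => s _; by rewrite (mulrC (Yv R k m s i)).
Qed.

Lemma cov_pair i j : (1 <= i)%N -> (i <= j)%N -> (j <= n)%N ->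
  `|Cov i j| <= c2 * D%:R / Num.sqrt ((j - i).+1)%:R.
Proof.
move=> h1 h2 h3.
have hD : 1 <= D%:R :> R by rewrite ler1n Dm_gt0.
have cp := cdel_gt0.
set sd : R := Num.sqrt ((j - i).+1)%:R; set sk : R := Num.sqrt k%:R.
have hsd : 0 < sd by rewrite sqrtr_gt0 ltr0Sn.
have hsk : 0 < sk by rewrite sqrtr_gt0 ltr0n; lia.
have E : Cov i j = Expect alpha (fun s : steps N => Yn R k m (at_ s) i * Yn R k m (at_ s) j) -
  Expect alpha (fun s : steps N => Yn R k m (at_ s) i) * Expect alpha (fun s : steps N => Yn R k m (at_ s) j).
  rewrite /Cov; congr (_ - _ * _).
  - by apply: eq_bigr => s _; rewrite !Yv_Yn //; lia.
  - by apply: eq_bigr => s _; rewrite !Yv_Yn //; lia.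
  - by apply: eq_bigr => s _; rewrite !Yv_Yn //; lia.
rewrite E.
case: (leqP (i + k - 1) j) => hij.
  apply: le_trans (@cov_far R alpha a01 k m N i j hk hij _) _; first by lia.
  set sL : R := Num.sqrt ((j - (i + k - 1)).+1)%:R.
  have hsL : 0 < sL by rewrite sqrtr_gt0 ltr0Sn.
  have hle : sd <= sk * sL.
    rewrite /sd /sk /sL -sqrtrM ?ler0n // -natrM ler_sqrt ?ler0n // ler_nat; nia.
  have : 1 / sL <= sk / sd.
    rewrite ler_pdivrMr // mulrAC ler_pdivlMr //; lra.
  move=> H.
  have -> : 2 * (D%:R * (cdel alpha / sL)) = 2 * cdel alpha * D%:R * (1 / sL) by ring.
  have -> : c2 * D%:R / sd = (2 * cdel alpha + 1) * D%:R * (sk / sd) by rewrite /c2 -/sk; ring.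
  have hc : 0 <= 2 * cdel alpha * D%:R by apply: mulr_ge0; lra.
  apply: le_trans (ler_wpM2l hc H) _.
  apply: ler_wpM2r; first by apply: divr_ge0; lra.
  apply: ler_wpM2r; lra.
apply: le_trans (cov_le1 a01 (fun s => Yn01 R k m (at_ s) i) (fun s => Yn01 R k m (at_ s) j)) _.
have hle : sd <= sk by rewrite /sd /sk ler_sqrt ?ler0n // ler_nat; lia.
rewrite ler_pdivlMr // mul1r /c2 -/sk.
have : sk <= sk * D%:R by rewrite ler_peMr //; lra.
have : 0 <= cdel alpha * sk * D%:R by apply: mulr_ge0; [apply: mulr_ge0|]; lra.
nra.
Qed.

End Pair.

Section Lin.
Variable R : realType.
Variable alpha : R.
Variable N : nat.

Lemma Expect_sum (r : seq nat) (G : nat -> steps N -> R) :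
  Expect alpha (fun s => \sum_(i <- r) G i s) = \sum_(i <- r) Expect alpha (G i).
Proof.
rewrite /Expect exchange_big /=; apply: eq_bigr => s _; by rewrite mulr_sumr.
Qed.

Lemma Expect_scale c (f : steps N -> R) : Expect alpha (fun s => c * f s) = c * Expect alpha f.
Proof. by rewrite /Expect mulr_sumr; apply: eq_bigr => s _; ring. Qed.

Lemma Expect_ext (f g : steps N -> R) : (forall s, f s = g s) -> Expect alpha f = Expect alpha g.
Proof. by move=> h; apply: eq_bigr => s _; rewrite h. Qed.

Lemma Expect_cov (f g : steps N -> R) :
  Expect alpha (fun s => (f s - Expect alpha f) * (g s - Expect alpha g)) =
  Expect alpha (fun s => f s * g s) - Expect alpha f * Expect alpha g.
Proof.
set a := Expect alpha f; set b := Expect alpha g.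
have hw := ww_sum alpha N.
rewrite /Expect.
have -> : \sum_(s : steps N) walk_weight alpha s * ((f s - a) * (g s - b)) =
  \sum_(s : steps N) walk_weight alpha s * (f s * g s) - b * \sum_(s : steps N) walk_weight alpha s * f s
  - a * \sum_(s : steps N) walk_weight alpha s * g s + a * b * \sum_(s : steps N) walk_weight alpha s.
  rewrite (eq_bigr (fun s => walk_weight alpha s * (f s * g s) - b * (walk_weight alpha s * f s)
     - a * (walk_weight alpha s * g s) + a * b * walk_weight alpha s)); last by move=> s _; ring.
  by rewrite big_split /= !sumrB -!mulr_sumr.
rewrite hw -/(Expect alpha f) -/(Expect alpha g) -/a -/b; ring.
Qed.

Lemma Var_sum (c : R) (r : seq nat) (F : nat -> steps N -> R) :
  Var alpha (fun s => c * \sum_(i <- r) F i s) =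
  c ^+ 2 * \sum_(i <- r) \sum_(j <- r)
     (Expect alpha (fun s => F i s * F j s) - Expect alpha (F i) * Expect alpha (F j)).
Proof.
transitivity (c ^+ 2 * \sum_(i <- r) \sum_(j <- r) Expect alpha
    (fun s => (F i s - Expect alpha (F i)) * (F j s - Expect alpha (F j)))); last first.
  by congr (_ * _); apply: eq_bigr => i _; apply: eq_bigr => j _; apply: Expect_cov.
rewrite (eq_bigr (fun i => Expect alpha (fun s => \sum_(j <- r)
    (F i s - Expect alpha (F i)) * (F j s - Expect alpha (F j))))); last first.
  by move=> i _; rewrite Expect_sum.
rewrite -Expect_sum -Expect_scale /Var Expect_scale Expect_sum.
apply: Expect_ext => s.
rewrite -mulrBr exprMn; congr (_ * _).
rewrite -sumrB expr2 mulr_suml; apply: eq_bigr => i _.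
by rewrite mulr_sumr; apply: eq_bigr => j _.
Qed.
End Lin.

Lemma sqrt_sum (R : realType) n :
  \sum_(0 <= d < n) 1 / Num.sqrt ((d.+1)%:R : R) <= 2 * Num.sqrt (n%:R : R).
Proof.
elim: n => [|n IH]; first by rewrite big_geq // sqrtr0 mulr0.
rewrite big_nat_recr //=; apply: le_trans (lerD IH (lexx _)) _.
set a := Num.sqrt (n%:R : R); set b := Num.sqrt ((n.+1)%:R : R).
have ha : 0 <= a by apply: sqrtr_ge0.
have hb : 0 < b by rewrite sqrtr_gt0 ltr0Sn.
have haa : a * a = n%:R by rewrite -expr2 sqr_sqrtr // ler0n.
have hbb : b * b = a * a + 1 by rewrite -expr2 sqr_sqrtr ?ler0n // haa natr1.
have H1 : 2 * a * b <= 2 * (a * a) + 1.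
  have h0 : 0 <= 2 * a * b by apply: mulr_ge0; [apply: mulr_ge0|]; lra.
  have h0' : 0 <= 2 * (a * a) + 1 by have := mulr_ge0 ha ha; lra.
  rewrite -(ler_sqr h0 h0').
  have -> : (2 * a * b) ^+ 2 = 4 * (a * a) * (b * b) by ring.
  rewrite hbb.
  have -> : (2 * (a * a) + 1) ^+ 2 = 4 * (a * a) * (a * a + 1) + 1 by ring.
  lra.
have H : 1 <= 2 * b * b - 2 * a * b.
  have -> : 2 * b * b = 2 * (b * b) by ring.
  rewrite hbb; lra.
have -> : 1 / b = (1 / b) * 1 by rewrite mulr1.
have : 1 / b * 1 <= 1 / b * (2 * b * b - 2 * a * b).
  by apply: ler_wpM2l => //; apply: divr_ge0; lra.
have -> : 1 / b * (2 * b * b - 2 * a * b) = 2 * b - 2 * a.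
  by field; apply/negP => /eqP; lra.
lra.
Qed.

Lemma dist_sum (R : realType) (g : nat -> R) a i b : (forall d, 0 <= g d) -> (a <= i < b)%N ->
  \sum_(a <= j < b) g ((i - j) + (j - i))%N <= 2 * \sum_(0 <= d < b - a) g d.
Proof.
move=> hg /andP[hai hib].
have hsub (x y : nat) : (x <= y)%N -> \sum_(0 <= d < x) g d <= \sum_(0 <= d < y) g d.
  move=> hxy; rewrite [X in _ <= X](big_cat_nat (n := x)) //= -[X in X <= _]addr0 lerD2l.
  by apply: sumr_ge0 => d _.
rewrite (big_cat_nat (n := i)) //=; last by apply: ltnW.
rewrite mulr2n mulrDl mul1r; apply: lerD.
  rewrite big_nat_rev /=.
  rewrite (eq_big_nat _ _ (F2 := fun j => g (j + 1 - a)%N)); last first.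
    by move=> j /andP[h1 h2]; congr g; lia.
  rewrite -{1}[a]add0n big_addn.
  rewrite (eq_big_nat _ _ (F2 := fun j => g j.+1)); last first.
    by move=> j _; congr g; lia.
  apply: le_trans (_ : \sum_(0 <= d < (i - a).+1) g d <= _); last by apply: hsub; lia.
  by rewrite big_nat_recl //= -[X in X <= _]add0r lerD2r.
rewrite -{1}[i]add0n big_addn.
rewrite (eq_big_nat _ _ (F2 := fun j => g j)); last by move=> j _; congr g; lia.
by apply: hsub; lia.
Qed.

Theorem proposition5 (R : realType) (alpha : R) (k : nat) :
  0 < alpha < 1 -> (1 <= k)%N ->
  exists C : R, 0 < C /\
    forall m n : nat, (1 <= m)%N -> (1 <= n)%N ->
      Var alpha (@Sbar R n k m) <= C * (Dm m)%:R ^+ 4 / Num.sqrt (n%:R).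
Proof.
move=> a01 hk.
have hc2 : 0 < c2 alpha k.
  rewrite /c2; apply: mulr_gt0; first by have := cdel_gt0 a01; lra.
  by rewrite sqrtr_gt0 ltr0n.
exists (4 * c2 alpha k); split; first lra.
move=> m n hm hn.
have EV : Var alpha (@Sbar R n k m) = (n%:R^-1) ^+ 2 *
    \sum_(1 <= i < n.+1) \sum_(1 <= j < n.+1) Cov alpha k m n i j.
  exact: (Var_sum alpha (n%:R^-1) (index_iota 1 n.+1) (fun i s => Yv R k m s i)).
set D : R := (Dm m)%:R.
have hD : 1 <= D by rewrite /D ler1n Dm_gt0.
set g : nat -> R := fun d => 1 / Num.sqrt ((d.+1)%:R).
have hg d : 0 <= g d by rewrite /g; apply: divr_ge0; [lra | apply: sqrtr_ge0].
have Hij i j : (1 <= i <= n)%N -> (1 <= j <= n)%N ->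
    `|Cov alpha k m n i j| <= c2 alpha k * D * g ((i - j) + (j - i))%N.
  move=> /andP[hi1 hi2] /andP[hj1 hj2].
  case: (leqP i j) => hij.
    rewrite (_ : (i - j = 0)%N); last by lia.
    rewrite add0n /g mulrA mulr1. have := cov_pair a01 m hk hi1 hij hj2. by rewrite /D.
  rewrite CovC (_ : (j - i = 0)%N); last by lia.
  rewrite addn0 /g mulrA mulr1. have := cov_pair a01 m hk hj1 (ltnW hij) hi2. by rewrite /D.
set sq : R := Num.sqrt n%:R.
have hsq : 0 < sq by rewrite sqrtr_gt0 ltr0n.
have hsq2 : sq * sq = n%:R by rewrite -expr2 sqr_sqrtr // ler0n.
have Hrow i : (1 <= i <= n)%N ->
    \sum_(1 <= j < n.+1) Cov alpha k m n i j <= c2 alpha k * D * (4 * sq).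
  move=> hi.
  apply: le_trans (_ : \sum_(1 <= j < n.+1) c2 alpha k * D * g ((i - j) + (j - i))%N <= _).
    apply: ler_sum_nat => j hj; apply: le_trans (Hij i j hi _); first by apply: ler_norm.
    by move: hj; rewrite ltnS.
  rewrite -mulr_sumr; apply: ler_wpM2l; first by apply: mulr_ge0; lra.
  apply: le_trans (dist_sum hg (_ : (1 <= i < n.+1)%N)) _; first by rewrite ltnS.
  rewrite subSS subn0 (_ : 4 * sq = 2 * (2 * sq)); last by ring.
  by apply: ler_wpM2l; [lra | apply: sqrt_sum].
have Hall : \sum_(1 <= i < n.+1) \sum_(1 <= j < n.+1) Cov alpha k m n i j <=
    n%:R * (c2 alpha k * D * (4 * sq)).
  apply: le_trans (_ : \sum_(1 <= i < n.+1) c2 alpha k * D * (4 * sq) <= _).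
    by apply: ler_sum_nat => i hi; apply: Hrow; move: hi; rewrite ltnS.
  by rewrite sumr_const_nat subn1 /= [X in _ <= X]mulr_natl.
rewrite EV.
have hn2 : 0 <= (n%:R^-1) ^+ 2 :> R by apply: exprn_ge0; rewrite invr_ge0 ler0n.
apply: le_trans (ler_wpM2l hn2 Hall) _.
have -> : (n%:R^-1) ^+ 2 * (n%:R * (c2 alpha k * D * (4 * sq))) = 4 * c2 alpha k * D / sq.
  rewrite -hsq2; field; apply/negP => /eqP; lra.
have hD4 : D <= D ^+ 4.
  have h1 : 1 <= D ^+ 3 by apply: exprn_ege1.
  rewrite exprS; have : D * 1 <= D * D ^+ 3 by apply: ler_wpM2l => //; lra.
  by rewrite mulr1.
apply: ler_wpM2r; first by rewrite invr_ge0; lra.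
apply: ler_wpM2l => //; lra.
Qed.
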